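(* Let $M$ be any randomized implementation of a TAS object for two processes from registers, and let $t\ge0$ be an integer. Then there is an oblivious adversary $A$ (i.e., a fixed schedule) such that, in the random execution in which both processes call $\mathrm{TAS}()$ and are scheduled by $A$, with probability at least $4^{-t}$ some process executes at least $t$ shared-memory steps during its $\mathrm{TAS}()$ call.
   Context: Model. Two processes in an asynchronous shared-memory system communicate via atomic read/write registers. Algorithms are randomized: a coin flip is a private local step returning a value drawn from a fixed distribution on a countable set $\Omega$; w.l.o.g. each process alternates coin-flip steps and shared-memory (read or write) steps, starting with a coin flip. An oblivious adversary fixes the entire schedule (the sequence of process IDs taking steps) in advance, independently of coin flips; a finished process takes no further steps. A TAS object stores a bit, initially $0$, and supports a one-time operation $\mathrm{TAS}()$ that sets the bit and returns its previous value; the implementation must be linearizable, so in any execution where both calls complete exactly one returns $0$. *)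

(* Defs.v *)
From Stdlib Require Import Reals ClassicalEpsilon Bool Arith.
Open Scope R_scope.
Set Implicit Arguments.

(** Processes are identified by [bool] ([false] = p0, [true] = p1).
    TAS return values: [false] = 0, [true] = 1. *)

(** Shared-memory operations (decided by the local state right after a coin
    flip); [ORet b] means the process returns [b] from TAS() and finishes. *)
Inductive Op (Reg Val : Type) : Type :=
| ORead (r : Reg)
| OWrite (r : Reg) (v : Val)
| ORet (b : bool).
Arguments ORead {Reg Val}.
Arguments OWrite {Reg Val}.
Arguments ORet {Reg Val}.

(** Each process alternates coin-flip steps and shared-memory steps, starting
    with a coin flip.  In a coin-flip step, process [p] in local state [s]
    obtains [w : Omega] and moves to [coin p s w]; its next operation is then
    [nextop p (coin p s w)] (if this is [ORet b] the TAS() call returns [b]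
    and the process takes no further steps).  A read of [r] returning [v]
    moves the state [s] to [onread p s v]; a write leaves the local state
    unchanged (it was determined by the state). *)
Record TASImpl : Type := {
  Omega : Type;
  enumO : nat -> option Omega;        (* Omega is countable *)
  mu : Omega -> R;                    (* the fixed coin distribution *)
  Reg : Type;
  reg_eq_dec : forall x y : Reg, {x = y} + {x <> y};
  Val : Type;
  reg_init : Reg -> Val;
  Loc : Type;
  loc_init : bool -> Loc;
  coin : bool -> Loc -> Omega -> Loc;
  nextop : bool -> Loc -> Op Reg Val;
  onread : bool -> Loc -> Val -> Loc
}.

Definition valid_coins (M : TASImpl) : Prop :=
  (forall w, 0 <= mu M w) /\
  (forall w, exists n, enumO M n = Some w) /\
  (forall n m w, enumO M n = Some w -> enumO M m = Some w -> n = m) /\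
  infinite_sum (fun n => match enumO M n with Some w => mu M w | None => 0 end) 1.

Section Exec.
Variable M : TASImpl.

(** Phase of a process: about to flip a coin, about to perform a memory
    operation, or done with result [b]; [other] records whether the other
    process had invoked its TAS() (taken a step) when this one returned. *)
Inductive Phase : Type :=
| PCoin
| PMem (o : Op (Reg M) (Val M))
| PDone (b : bool) (other : bool).

Record Cfg : Type := {
  loc : bool -> Loc M;
  ph : bool -> Phase;
  mem : Reg M -> Val M;
  nmem : bool -> nat;     (* shared-memory steps executed so far *)
  ncoin : bool -> nat;    (* coin flips executed so far *)
  started : bool -> bool  (* has the process taken a step (invoked TAS) *)
}.

Definition upd {X : Type} (f : bool -> X) (p : bool) (x : X) : bool -> X :=
  fun q => if Bool.eqb q p then x else f q.

Definition init_cfg : Cfg :=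
  {| loc := loc_init M; ph := fun _ => PCoin; mem := reg_init M;
     nmem := fun _ => 0%nat; ncoin := fun _ => 0%nat;
     started := fun _ => false |}.

Definition coin_step (p : bool) (w : Omega M) (c : Cfg) : Cfg :=
  let s' := coin M p (loc c p) w in
  let ph' := match nextop M p s' with
             | ORet b => PDone b (started c (negb p))
             | o => PMem o end in
  {| loc := upd (loc c) p s'; ph := upd (ph c) p ph'; mem := mem c;
     nmem := nmem c; ncoin := upd (ncoin c) p (S (ncoin c p));
     started := upd (started c) p true |}.

Definition mem_step (p : bool) (c : Cfg) : Cfg :=
  match ph c p with
  | PMem (ORead r) =>
      {| loc := upd (loc c) p (onread M p (loc c p) (mem c r));
         ph := upd (ph c) p PCoin; mem := mem c;
         nmem := upd (nmem c) p (S (nmem c p)); ncoin := ncoin c;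
         started := upd (started c) p true |}
  | PMem (OWrite r v) =>
      {| loc := loc c; ph := upd (ph c) p PCoin;
         mem := fun r' => if reg_eq_dec M r' r then v else mem c r';
         nmem := upd (nmem c) p (S (nmem c p)); ncoin := ncoin c;
         started := upd (started c) p true |}
  | PMem (ORet b) =>  (* unreachable *)
      {| loc := loc c; ph := upd (ph c) p (PDone b (started c (negb p)));
         mem := mem c; nmem := nmem c; ncoin := ncoin c;
         started := upd (started c) p true |}
  | _ => c
  end.

Definition step (p : bool) (w : Omega M) (c : Cfg) : Cfg :=
  match ph c p with PCoin => coin_step p w c | _ => mem_step p c end.

(** A schedule: at time [i], [Some p] lets process [p] take a step,
    [None] is an idle slot (so finite schedules are included). *)
Definition Schedule := nat -> option bool.

(** Deterministic execution: [cs p k] is the outcome of the k-th coin flip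
    of process [p]. *)
Fixpoint exec (sg : Schedule) (cs : bool -> nat -> Omega M) (n : nat) : Cfg :=
  match n with
  | O => init_cfg
  | S k => let c := exec sg cs k in
           match sg k with
           | None => c
           | Some p => step p (cs p (ncoin c p)) c
           end
  end.

(** Linearizability of the (finite) history of one-shot TAS() calls, where
    process [p]'s call is invoked at its first step and responds at the step
    where it returns:
    - a call that responds before the other call is invoked returns 0;
    - if both calls have completed, exactly one returns 0. *)
Definition lin_ok (c : Cfg) : Prop :=
  (forall p b, ph c p = PDone b false -> b = false) /\
  (forall b0 o0 b1 o1, ph c false = PDone b0 o0 -> ph c true = PDone b1 o1 ->
     b0 <> b1).

End Exec.

Arguments PCoin {M}.

Definition is_TAS (M : TASImpl) : Prop :=
  valid_coins M /\
  forall (sg : Schedule) (cs : bool -> nat -> Omega M) (n : nat),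
    lin_ok (exec M sg cs n).

Unset Implicit Arguments.

Definition psum (f : nat -> R) : R :=
  epsilon (inhabits 0) (fun l => infinite_sum f l).

Definition Ecoin (M : TASImpl) (f : Omega M -> R) : R :=
  psum (fun n => match enumO M n with Some w => mu M w * f w | None => 0 end).

(** [pv M sg t n i c]: probability that, running the steps of [sg] at times
    [i, ..., i+n-1] from configuration [c] with fresh independent coins,
    some process has executed at least [t] shared-memory steps at the end. *)
Fixpoint pv (M : TASImpl) (sg : Schedule) (t : nat) (n i : nat) (c : Cfg M) : R :=
  match n with
  | O => if (t <=? nmem c false)%nat || (t <=? nmem c true)%nat then 1 else 0
  | S k =>
      match sg i with
      | None => pv M sg t k (S i) c
      | Some p =>
          match ph c p with
          | PCoin => Ecoin M (fun w => pv M sg t k (S i) (coin_step p w c))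
          | _ => pv M sg t k (S i) (mem_step p c)
          end
      end
  end.

Definition prob_by (M : TASImpl) (sg : Schedule) (t n : nat) : R :=
  pv M sg t n 0 (init_cfg M).

(* Main.v *)
Require Import Defs.
From Stdlib Require Import Reals Lia Lra List Bool Arith FunctionalExtensionality Classical ClassicalEpsilon.
Open Scope R_scope.

Definition pstep {M : TASImpl} (cs : bool -> nat -> Omega M) (p : bool) (c : Cfg M) : Cfg M :=
  let c1 := step p (cs p (ncoin c p)) c in step p (cs p (ncoin c1 p)) c1.

Definition psrun {M : TASImpl} cs (l : list bool) (c : Cfg M) : Cfg M :=
  fold_left (fun c p => pstep cs p c) l c.

Fixpoint soloN {M : TASImpl} cs (p : bool) (n : nat) (c : Cfg M) : Cfg M :=
  match n with O => c | S n => soloN cs p n (pstep cs p c) end.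

Definition strip {M : TASImpl} (x : Phase M) : Phase M :=
  match x with PDone _ b _ => PDone M b false | y => y end.

Definition view {M : TASImpl} (p : bool) (c : Cfg M) :=
  (loc c p, strip (ph c p), mem c, nmem c p, ncoin c p).

Definition op {M : TASImpl} (cs : bool -> nat -> Omega M) p (c : Cfg M) :=
  nextop M p (coin M p (loc c p) (cs p (ncoin c p))).

Definition W {M : TASImpl} cs (t : nat) p (c : Cfg M) : option bool :=
  match ph (soloN cs p (t - nmem c p) c) p with PDone _ b _ => Some b | _ => None end.

Lemma upd_same {X : Type} (f : bool -> X) p x : upd f p x p = x.
Proof. unfold upd; rewrite eqb_reflx; auto. Qed.
Lemma upd_other {X : Type} (f : bool -> X) p x : upd f p x (negb p) = f (negb p).
Proof. unfold upd; destruct p; auto. Qed.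

Lemma step_view {M : TASImpl} p w (c d : Cfg M) :
  view p c = view p d -> view p (step p w c) = view p (step p w d).
Proof.
  unfold view; intros H; injection H; clear H; intros H5 H4 H3 H2 H1.
  destruct c as [l1 ph1 m1 n1 k1 s1], d as [l2 ph2 m2 n2 k2 s2]; simpl in *.
  subst.
  unfold step, coin_step, mem_step; simpl.
  destruct p; simpl;
  destruct (ph1 _) as [ | o1 | b1 x1] eqn:E1; destruct (ph2 _) as [ | o2 | b2 x2] eqn:E2;
    simpl in H2; try discriminate; simpl; rewrite ?E1, ?E2; simpl; unfold upd; simpl;
    rewrite ?H1, ?H4, ?H5;
  try (destruct (nextop M _ _); reflexivity);
  try (injection H2; intros; subst; destruct o2; simpl; rewrite ?H1, ?H4, ?H5; reflexivity);
  try (injection H2; intros; subst; reflexivity).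
Qed.

Lemma pstep_view {M : TASImpl} cs p (c d : Cfg M) :
  view p c = view p d -> view p (pstep cs p c) = view p (pstep cs p d).
Proof.
  intros H. unfold pstep.
  assert (Hk : ncoin c p = ncoin d p) by (injection H; auto).
  rewrite Hk.
  assert (H1 := step_view p (cs p (ncoin d p)) c d H).
  assert (Hk1 : ncoin (step p (cs p (ncoin d p)) c) p = ncoin (step p (cs p (ncoin d p)) d) p)
    by (injection H1; auto).
  rewrite Hk1. apply step_view; auto.
Qed.

Lemma soloN_view {M : TASImpl} cs p n (c d : Cfg M) :
  view p c = view p d -> view p (soloN cs p n c) = view p (soloN cs p n d).
Proof.
  revert c d; induction n; intros c d H; simpl; auto.
  apply IHn, pstep_view, H.
Qed.

Lemma W_view {M : TASImpl} cs t p (c d : Cfg M) :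
  view p c = view p d -> W cs t p c = W cs t p d.
Proof.
  intros H. unfold W.
  assert (Hn : nmem c p = nmem d p) by (injection H; auto).
  rewrite Hn.
  assert (H1 := soloN_view cs p (t - nmem d p) c d H).
  injection H1; intros _ _ _ Hs _.
  destruct (ph (soloN cs p (t - nmem d p) c) p), (ph (soloN cs p (t - nmem d p) d) p);
    simpl in Hs; try discriminate; auto.
  injection Hs; intros; subst; auto.
Qed.

Lemma step_other {M : TASImpl} p w (c : Cfg M) :
  loc (step p w c) (negb p) = loc c (negb p) /\ ph (step p w c) (negb p) = ph c (negb p) /\
  nmem (step p w c) (negb p) = nmem c (negb p) /\ ncoin (step p w c) (negb p) = ncoin c (negb p) /\
  started (step p w c) (negb p) = started c (negb p).
Proof.
  destruct c as [l1 ph1 m1 n1 k1 s1]; destruct p; unfold step, coin_step, mem_step; simpl;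
  destruct (ph1 _) as [ | o | b x]; simpl; try destruct o; simpl; auto.
Qed.

Lemma pstep_other {M : TASImpl} cs p (c : Cfg M) :
  loc (pstep cs p c) (negb p) = loc c (negb p) /\ ph (pstep cs p c) (negb p) = ph c (negb p) /\
  nmem (pstep cs p c) (negb p) = nmem c (negb p) /\ ncoin (pstep cs p c) (negb p) = ncoin c (negb p) /\
  started (pstep cs p c) (negb p) = started c (negb p).
Proof.
  unfold pstep.
  destruct (step_other p (cs p (ncoin c p)) c) as (A1 & A2 & A3 & A4 & A5).
  destruct (step_other p (cs p (ncoin (step p (cs p (ncoin c p)) c) p)) (step p (cs p (ncoin c p)) c))
    as (B1 & B2 & B3 & B4 & B5).
  repeat split; congruence.
Qed.

Lemma pstep_done {M : TASImpl} cs p (c : Cfg M) b o :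
  ph c p = PDone M b o -> pstep cs p c = c.
Proof.
  intros H. unfold pstep, step. rewrite H. unfold mem_step. rewrite H. rewrite H. auto.
Qed.

Lemma pstep_ret {M : TASImpl} cs p (c : Cfg M) b :
  ph c p = PCoin -> op cs p c = ORet b ->
  ph (pstep cs p c) p = PDone M b (started c (negb p)) /\ mem (pstep cs p c) = mem c /\
  nmem (pstep cs p c) p = nmem c p.
Proof.
  intros H Ho. unfold op in Ho. destruct c as [l1 ph1 m1 n1 k1 s1]; simpl in *.
  unfold pstep, step, coin_step, mem_step; simpl; rewrite H; simpl.
  rewrite !upd_same, Ho. simpl. rewrite !upd_same. auto.
Qed.

Lemma pstep_read {M : TASImpl} cs p (c : Cfg M) r :
  ph c p = PCoin -> op cs p c = ORead r ->
  ph (pstep cs p c) p = PCoin /\ mem (pstep cs p c) = mem c /\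
  nmem (pstep cs p c) p = S (nmem c p).
Proof.
  intros H Ho. unfold op in Ho. destruct c as [l1 ph1 m1 n1 k1 s1]; simpl in *.
  unfold pstep, step, coin_step, mem_step; simpl; rewrite H; simpl.
  rewrite !upd_same, Ho. simpl. rewrite !upd_same. auto.
Qed.

Lemma pstep_write {M : TASImpl} cs p (c : Cfg M) r x :
  ph c p = PCoin -> op cs p c = OWrite r x ->
  ph (pstep cs p c) p = PCoin /\
  mem (pstep cs p c) = (fun r' => if reg_eq_dec M r' r then x else mem c r') /\
  nmem (pstep cs p c) p = S (nmem c p).
Proof.
  intros H Ho. unfold op in Ho. destruct c as [l1 ph1 m1 n1 k1 s1]; simpl in *.
  unfold pstep, step, coin_step, mem_step; simpl; rewrite H; simpl.
  rewrite !upd_same, Ho. simpl. rewrite !upd_same. auto.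
Qed.

Lemma op_other {M : TASImpl} cs p (c : Cfg M) :
  op cs (negb p) (pstep cs p c) = op cs (negb p) c.
Proof.
  unfold op. destruct (pstep_other cs p c) as (A1 & _ & _ & A4 & _). rewrite A1, A4; auto.
Qed.

Lemma step_nmem {M : TASImpl} p w (c : Cfg M) q : (nmem c q <= nmem (step p w c) q)%nat.
Proof.
  destruct c as [l1 ph1 m1 n1 k1 s1]; unfold step, coin_step, mem_step; simpl;
  destruct (ph1 p) as [ | o | b x]; simpl; try destruct o; simpl; unfold upd;
  try destruct (eqb q p) eqn:E; try apply eqb_prop in E; subst; auto.
Qed.

Lemma pstep_nmem {M : TASImpl} cs p (c : Cfg M) q : (nmem c q <= nmem (pstep cs p c) q)%nat.
Proof.
  unfold pstep. eapply Nat.le_trans; apply step_nmem.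
Qed.

Lemma psrun_app {M : TASImpl} cs l1 l2 (c : Cfg M) : psrun cs (l1 ++ l2) c = psrun cs l2 (psrun cs l1 c).
Proof. unfold psrun; apply fold_left_app. Qed.

Lemma psrun_nmem {M : TASImpl} cs l (c : Cfg M) q : (nmem c q <= nmem (psrun cs l c) q)%nat.
Proof.
  revert c; induction l; intros c; simpl; auto.
  eapply Nat.le_trans; [apply (pstep_nmem cs a c q) | apply IHl].
Qed.

Lemma soloN_psrun {M : TASImpl} cs p n (c : Cfg M) : soloN cs p n c = psrun cs (repeat p n) c.
Proof. revert c; induction n; intros c; simpl; auto. Qed.

Lemma psrun_other {M : TASImpl} cs p n (c : Cfg M) :
  ph (psrun cs (repeat p n) c) (negb p) = ph c (negb p) /\
  started (psrun cs (repeat p n) c) (negb p) = started c (negb p).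
Proof.
  revert c; induction n; intros c; simpl; auto.
  destruct (IHn (pstep cs p c)) as [A B].
  destruct (pstep_other cs p c) as (_ & A2 & _ & _ & A5). split; congruence.
Qed.

Lemma soloN_done {M : TASImpl} cs p n (c : Cfg M) b o :
  ph c p = PDone M b o -> soloN cs p n c = c.
Proof.
  intros H; induction n; simpl; auto. rewrite (pstep_done cs p c b o H). auto.
Qed.

Lemma W_tail {M : TASImpl} cs t p (c : Cfg M) :
  nmem (pstep cs p c) p = S (nmem c p) -> (nmem c p < t)%nat ->
  W cs t p (pstep cs p c) = W cs t p c.
Proof.
  intros H1 H2. unfold W. rewrite H1.
  replace (t - nmem c p)%nat with (S (t - S (nmem c p))) by lia. simpl. reflexivity.
Qed.

Lemma W_done {M : TASImpl} cs t p (c : Cfg M) b o :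
  ph (pstep cs p c) p = PDone M b o -> (nmem c p < t)%nat -> W cs t p c = Some b.
Proof.
  intros H1 H2. unfold W.
  replace (t - nmem c p)%nat with (S (t - S (nmem c p))) by lia. simpl.
  rewrite (soloN_done cs p _ _ b o H1), H1. auto.
Qed.

Lemma solo_cases {M : TASImpl} cs p n (c : Cfg M) :
  ph c p = PCoin ->
  (exists b o, ph (soloN cs p n c) p = PDone M b o) \/
  (ph (soloN cs p n c) p = PCoin /\ nmem (soloN cs p n c) p = (n + nmem c p)%nat).
Proof.
  revert c; induction n; intros c H; simpl; auto.
  destruct (op cs p c) as [r | r x | b] eqn:Ho.
  - destruct (pstep_read cs p c r H Ho) as (A1 & _ & A3).
    destruct (IHn _ A1) as [A|[B1 B2]]; auto. right; split; auto; lia.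
  - destruct (pstep_write cs p c r x H Ho) as (A1 & _ & A3).
    destruct (IHn _ A1) as [A|[B1 B2]]; auto. right; split; auto; lia.
  - destruct (pstep_ret cs p c b H Ho) as (A1 & _ & _).
    left. rewrite (soloN_done cs p n _ _ _ A1). eauto.
Qed.

Lemma W_none {M : TASImpl} cs t p (c : Cfg M) :
  ph c p = PCoin -> W cs t p c = None -> (t <= nmem (soloN cs p (t - nmem c p) c) p)%nat.
Proof.
  intros H HW. unfold W in HW.
  destruct (solo_cases cs p (t - nmem c p) c H) as [(b & o & A)|[B1 B2]].
  - rewrite A in HW; discriminate.
  - lia.
Qed.

Lemma W_some {M : TASImpl} cs t p (c : Cfg M) b :
  W cs t p c = Some b -> exists o, ph (soloN cs p (t - nmem c p) c) p = PDone M b o.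
Proof.
  unfold W. destruct (ph _ p); try discriminate. intros H; injection H; intros; subst; eauto.
Qed.

Lemma pstep_write2 {M : TASImpl} cs p (c : Cfg M) r x :
  ph c p = PCoin -> op cs p c = OWrite r x ->
  loc (pstep cs p c) p = coin M p (loc c p) (cs p (ncoin c p)) /\
  ncoin (pstep cs p c) p = S (ncoin c p).
Proof.
  intros H Ho. unfold op in Ho. destruct c as [l1 ph1 m1 n1 k1 s1]; simpl in *.
  unfold pstep, step, coin_step, mem_step; simpl; rewrite H; simpl.
  rewrite !upd_same, Ho. simpl. rewrite !upd_same. auto.
Qed.

Lemma view_other {M : TASImpl} cs p (c : Cfg M) :
  mem (pstep cs p c) = mem c -> view (negb p) (pstep cs p c) = view (negb p) c.
Proof.
  intros H. destruct (pstep_other cs p c) as (A1 & A2 & A3 & A4 & _).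
  unfold view. rewrite A1, A2, A3, A4, H. auto.
Qed.

Lemma solo_init_flag {M : TASImpl} cs p n (c : Cfg M) :
  started c (negb p) = false ->
  (ph c p = PCoin \/ exists b, ph c p = PDone M b false) ->
  forall b o, ph (soloN cs p n c) p = PDone M b o -> o = false.
Proof.
  revert c; induction n; intros c Hs Hph b o; simpl.
  - destruct Hph as [E|[b' E]]; rewrite E; try discriminate.
    intros Q; injection Q; auto.
  - destruct Hph as [E|[b' E]].
    + destruct (pstep_other cs p c) as (_ & _ & _ & _ & A5).
      apply IHn; [congruence|].
      destruct (op cs p c) as [r | r x | b0] eqn:Ho.
      * left; apply (pstep_read cs p c r E Ho).
      * left; apply (pstep_write cs p c r x E Ho).
      * right; exists b0. destruct (pstep_ret cs p c b0 E Ho) as (A & _). rewrite A, Hs; auto.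
    + rewrite (pstep_done cs p c b' false E). apply IHn; eauto.
Qed.

Definition good {M : TASImpl} (t : nat) (c : Cfg M) : Prop :=
  (t <= nmem c false \/ t <= nmem c true)%nat.

Definition Goal0 (M : TASImpl) cs t : Prop :=
  exists l, (length l <= 2 * t)%nat /\ good t (psrun cs l (init_cfg M)).

Definition inv (M : TASImpl) cs t (pre : list bool) (v : bool) : Prop :=
  let C := psrun cs pre (init_cfg M) in
  ph C false = PCoin /\ ph C true = PCoin /\
  length pre = (nmem C false + nmem C true)%nat /\
  (nmem C false <= t)%nat /\ (nmem C true <= t)%nat /\
  W cs t false C = Some v /\ W cs t true C = Some v.

Lemma solo_good (M : TASImpl) cs t pre p :
  let C := psrun cs pre (init_cfg M) in
  ph C p = PCoin -> length pre = (nmem C false + nmem C true)%nat ->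
  (nmem C false <= t)%nat -> (nmem C true <= t)%nat ->
  W cs t p C = None -> Goal0 M cs t.
Proof.
  intros C H1 H2 H3 H4 H5.
  exists (pre ++ repeat p (t - nmem C p)). split.
  - rewrite length_app, repeat_length. destruct p; lia.
  - unfold good. rewrite psrun_app, <- soloN_psrun. fold C.
    assert (A := W_none cs t p C H1 H5). destruct p; auto.
Qed.

Lemma both_same (M : TASImpl) (HM : forall cs l, lin_ok (psrun cs l (init_cfg M))) cs t pre p v o :
  let C := psrun cs pre (init_cfg M) in
  ph C p = PDone M v o -> W cs t (negb p) C = Some v -> False.
Proof.
  intros C H1 H2.
  destruct (W_some _ _ _ _ _ H2) as [o' A].
  rewrite soloN_psrun in A.
  destruct (psrun_other cs (negb p) (t - nmem C (negb p)) C) as [B _].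
  rewrite negb_involutive in B. rewrite H1 in B.
  destruct (HM cs (pre ++ repeat (negb p) (t - nmem C (negb p)))) as [_ L].
  rewrite psrun_app in L. fold C in L.
  destruct p; simpl in *.
  - apply (L v o' v o); auto.
  - apply (L v o v o'); auto.
Qed.

Lemma inv_W (M : TASImpl) cs t pre v b :
  inv M cs t pre v -> W cs t b (psrun cs pre (init_cfg M)) = Some v.
Proof. intros (_ & _ & _ & _ & _ & A & B); destruct b; auto. Qed.

Lemma inv_ph (M : TASImpl) cs t pre v b :
  inv M cs t pre v -> ph (psrun cs pre (init_cfg M)) b = PCoin.
Proof. intros (A & B & _); destruct b; auto. Qed.

Lemma psrun_snoc {M : TASImpl} cs pre p (c : Cfg M) :
  psrun cs (pre ++ p :: nil) c = pstep cs p (psrun cs pre c).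
Proof. rewrite psrun_app; reflexivity. Qed.

Lemma try_p (M : TASImpl) (HM : forall cs l, lin_ok (psrun cs l (init_cfg M))) cs t pre v p :
  let C := psrun cs pre (init_cfg M) in
  inv M cs t pre v -> (nmem C false < t)%nat -> (nmem C true < t)%nat ->
  (forall v', inv M cs t (pre ++ p :: nil) v' -> Goal0 M cs t) ->
  Goal0 M cs t \/
  (exists r x, op cs p C = OWrite r x /\ W cs t (negb p) (pstep cs p C) = Some (negb v)).
Proof.
  intros C Hinv H0 H1 Rec.
  assert (Hph : forall b, ph C b = PCoin) by (intros; eapply inv_ph; eauto).
  assert (HW : forall b, W cs t b C = Some v) by (intros; eapply inv_W; eauto).
  assert (Hlen : length pre = (nmem C false + nmem C true)%nat) by apply Hinv.
  assert (Hnp : (nmem C p < t)%nat) by (destruct p; auto).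
  destruct (pstep_other cs p C) as (O1 & O2 & O3 & O4 & O5).
  destruct (op cs p C) as [r | r x | b] eqn:Ho.
  -
    destruct (pstep_read cs p C r (Hph p) Ho) as (A1 & A2 & A3).
    left. apply (Rec v).
    unfold inv. rewrite psrun_snoc. fold C.
    assert (Wp : W cs t p (pstep cs p C) = Some v) by (rewrite W_tail; auto).
    assert (Wq : W cs t (negb p) (pstep cs p C) = Some v)
      by (rewrite (W_view cs t (negb p) _ C (view_other cs p C A2)); auto).
    rewrite length_app; simpl.
    destruct p; simpl in *; rewrite ?O2, ?O3, ?A1, ?A3, ?Hph; repeat split; auto; lia.
  -
    destruct (pstep_write cs p C r x (Hph p) Ho) as (A1 & A2 & A3).
    assert (Wp : W cs t p (pstep cs p C) = Some v) by (rewrite W_tail; auto).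
    assert (Hinv' : forall v', W cs t (negb p) (pstep cs p C) = Some v' -> v' = v ->
              inv M cs t (pre ++ p :: nil) v).
    { intros v' Wq E. subst v'.
      unfold inv. rewrite psrun_snoc. fold C. rewrite length_app; simpl.
      destruct p; simpl in *; rewrite ?O2, ?O3, ?A1, ?A3, ?Hph; repeat split; auto; lia. }
    destruct (W cs t (negb p) (pstep cs p C)) as [v'|] eqn:Wq.
    + destruct (Bool.eqb v' v) eqn:E.
      * apply eqb_prop in E. left. apply (Rec v). eapply Hinv'; eauto.
      * right. exists r, x. split; auto.
        destruct v, v'; simpl in E; try discriminate; auto.
    + left. apply (solo_good M cs t (pre ++ p :: nil) (negb p));
        rewrite psrun_snoc; fold C; rewrite ?length_app; simpl;
        destruct p; simpl in *; rewrite ?O2, ?O3, ?A3, ?Hph; auto; lia.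
  -
    destruct (pstep_ret cs p C b (Hph p) Ho) as (A1 & A2 & A3).
    assert (Wp : W cs t p C = Some b) by (eapply W_done; eauto).
    rewrite HW in Wp. injection Wp; intros; subst b.
    assert (Wq : W cs t (negb p) (pstep cs p C) = Some v)
      by (rewrite (W_view cs t (negb p) _ C (view_other cs p C A2)); auto).
    exfalso. apply (both_same M HM cs t (pre ++ p :: nil) p v (started C (negb p)));
      rewrite psrun_snoc; fold C; auto.
Qed.

Lemma wr_comm {M : TASImpl} (m : Reg M -> Val M) r0 x0 r1 x1 :
  r0 <> r1 ->
  (fun r' => if reg_eq_dec M r' r0 then x0 else
     (fun r'' => if reg_eq_dec M r'' r1 then x1 else m r'') r') =
  (fun r' => if reg_eq_dec M r' r1 then x1 else
     (fun r'' => if reg_eq_dec M r'' r0 then x0 else m r'') r').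
Proof.
  intros H. apply functional_extensionality; intros r'.
  destruct (reg_eq_dec M r' r0), (reg_eq_dec M r' r1); subst; auto. congruence.
Qed.

Lemma wr_same {M : TASImpl} (m : Reg M -> Val M) r0 x0 x1 :
  (fun r' => if reg_eq_dec M r' r0 then x0 else
     (fun r'' => if reg_eq_dec M r'' r0 then x1 else m r'') r') =
  (fun r' => if reg_eq_dec M r' r0 then x0 else m r').
Proof.
  apply functional_extensionality; intros r'.
  destruct (reg_eq_dec M r' r0); subst; auto.
Qed.

Lemma core (M : TASImpl) (HM : forall cs l, lin_ok (psrun cs l (init_cfg M))) cs t :
  forall k pre v, inv M cs t pre v ->
  (2 * t <= nmem (psrun cs pre (init_cfg M)) false + nmem (psrun cs pre (init_cfg M)) true + k)%nat ->
  Goal0 M cs t.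
Proof.
  induction k as [|k IH]; intros pre v Hinv Hk;
  set (C := psrun cs pre (init_cfg M)) in *;
  assert (Hlen : length pre = (nmem C false + nmem C true)%nat) by apply Hinv;
  assert (Hle0 : (nmem C false <= t)%nat) by apply Hinv;
  assert (Hle1 : (nmem C true <= t)%nat) by apply Hinv;
  (destruct (Nat.lt_ge_cases (nmem C false) t) as [L0|L0];
   [destruct (Nat.lt_ge_cases (nmem C true) t) as [L1|L1]|]);
  try solve [exists pre; split; [lia | unfold good; fold C; auto]].
  { lia. }
  assert (Rec : forall p v', inv M cs t (pre ++ p :: nil) v' -> Goal0 M cs t).
  { intros p v' Hi. apply (IH _ v' Hi).
    assert (Hl := proj1 (proj2 (proj2 Hi))). simpl in Hl.
    rewrite length_app in Hl; simpl in Hl. lia. }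
  assert (Hph : forall b, ph C b = PCoin) by (intros; eapply inv_ph; eauto).
  assert (HW : forall b, W cs t b C = Some v) by (intros; eapply inv_W; eauto).
  destruct (try_p M HM cs t pre v false Hinv L0 L1 (Rec false)) as [G0|(r0 & x0 & Ho0 & W0)]; auto.
  destruct (try_p M HM cs t pre v true Hinv L0 L1 (Rec true)) as [G0|(r1 & x1 & Ho1 & W1)]; auto.
  fold C in Ho0, W0, Ho1, W1. simpl in W0, W1.
  set (C0 := pstep cs false C) in *. set (C1 := pstep cs true C) in *.
  destruct (pstep_write cs false C r0 x0 (Hph false) Ho0) as (A1 & A2 & A3).
  destruct (pstep_write2 cs false C r0 x0 (Hph false) Ho0) as (A4 & A5).
  destruct (pstep_write cs true C r1 x1 (Hph true) Ho1) as (B1 & B2 & B3).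
  destruct (pstep_write2 cs true C r1 x1 (Hph true) Ho1) as (B4 & B5).
  destruct (pstep_other cs false C) as (P1 & P2 & P3 & P4 & _).
  destruct (pstep_other cs true C) as (Q1 & Q2 & Q3 & Q4 & _).
  simpl in P1, P2, P3, P4, Q1, Q2, Q3, Q4. fold C0 in A1, A2, A3, A4, A5, P1, P2, P3, P4.
  fold C1 in B1, B2, B3, B4, B5, Q1, Q2, Q3, Q4.
  assert (Ho0' : op cs false C1 = OWrite r0 x0) by (unfold C1; rewrite <- Ho0; apply (op_other cs true C)).
  assert (Ho1' : op cs true C0 = OWrite r1 x1) by (unfold C0; rewrite <- Ho1; apply (op_other cs false C)).
  assert (Hph1 : ph C1 false = PCoin) by (rewrite Q2; auto).
  assert (Hph0 : ph C0 true = PCoin) by (rewrite P2; auto).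
  set (D := pstep cs false C1).
  destruct (pstep_write cs false C1 r0 x0 Hph1 Ho0') as (D1 & D2 & D3).
  destruct (pstep_write2 cs false C1 r0 x0 Hph1 Ho0') as (D4 & D5).
  fold D in D1, D2, D3, D4, D5.
  assert (WD : W cs t false D = Some (negb v)) by (unfold D; rewrite W_tail; auto; lia).
  destruct (reg_eq_dec M r0 r1) as [E|E].
  - subst r1. exfalso.
    assert (V : view false D = view false C0).
    { unfold view. rewrite D1, D2, D3, D4, D5, A1, A2, A3, A4, A5, B2, Q1, Q3, Q4, wr_same. auto. }
    rewrite (W_view cs t false D C0 V) in WD.
    unfold C0 in WD. rewrite W_tail in WD; auto. rewrite HW in WD.
    destruct v; discriminate.
  - set (D' := pstep cs true C0).
    destruct (pstep_write cs true C0 r1 x1 Hph0 Ho1') as (E1 & E2 & E3).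
    destruct (pstep_write2 cs true C0 r1 x1 Hph0 Ho1') as (E4 & E5).
    destruct (pstep_other cs true C0) as (R1 & R2 & R3 & R4 & _).
    simpl in R1, R2, R3, R4. fold D' in E1, E2, E3, E4, E5, R1, R2, R3, R4.
    assert (V : view false D' = view false D).
    { unfold view. rewrite D1, D2, D3, D4, D5, E2, R1, R2, R3, R4, A1, A2, A3, A4, A5, B2, Q1, Q3, Q4.
      rewrite wr_comm; auto. }
    assert (Hinv2 : inv M cs t (pre ++ false :: true :: nil) (negb v)).
    { unfold inv. rewrite psrun_app. simpl. fold C. fold C0. fold D'.
      rewrite length_app; simpl.
      rewrite E1, E3, R2, R3, A1, A3, P3.
      repeat split; try lia.
      - rewrite (W_view cs t false D' D V); auto.
      - unfold D'. rewrite W_tail; auto. rewrite P3; lia. }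
    apply (IH _ _ Hinv2).
    rewrite psrun_app. simpl. fold C. fold C0. fold D'. rewrite E3, R3, P3, A3. lia.
Qed.

Lemma W_init (M : TASImpl) (HM : forall cs l, lin_ok (psrun cs l (init_cfg M))) cs t p b :
  W cs t p (init_cfg M) = Some b -> b = false.
Proof.
  intros H. destruct (W_some _ _ _ _ _ H) as [o A].
  assert (o = false).
  { eapply (solo_init_flag cs p); [ | | exact A]; simpl; auto. }
  subst o. rewrite soloN_psrun in A.
  destruct (HM cs (repeat p (t - nmem (init_cfg M) p))) as [L _].
  eapply L; eauto.
Qed.

Lemma det (M : TASImpl) (HM : forall cs l, lin_ok (psrun cs l (init_cfg M))) cs t : Goal0 M cs t.
Proof.
  assert (E : psrun cs nil (init_cfg M) = init_cfg M) by reflexivity.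
  destruct (W cs t false (init_cfg M)) as [b0|] eqn:W0.
  2:{ apply (solo_good M cs t nil false); rewrite E; simpl; auto; lia. }
  destruct (W cs t true (init_cfg M)) as [b1|] eqn:W1.
  2:{ apply (solo_good M cs t nil true); rewrite E; simpl; auto; lia. }
  pose proof (W_init M HM cs t _ _ W0). pose proof (W_init M HM cs t _ _ W1). subst.
  apply (core M HM cs t (2 * t) nil false).
  - unfold inv. rewrite E. simpl. repeat split; auto; lia.
  - rewrite E; simpl; lia.
Qed.

Definition onestep {M : TASImpl} (sg : Schedule) (cs : bool -> nat -> Omega M) (j : nat) (c : Cfg M) :=
  match sg j with None => c | Some p => step p (cs p (ncoin c p)) c end.

Fixpoint run {M : TASImpl} (sg : Schedule) cs (n i : nat) (c : Cfg M) : Cfg M :=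
  match n with O => c | S n => run sg cs n (S i) (onestep sg cs i c) end.

Lemma run_snoc {M : TASImpl} sg cs n : forall i (c : Cfg M),
  run sg cs (S n) i c = onestep sg cs (i + n) (run sg cs n i c).
Proof.
  induction n; intros i c.
  - simpl. rewrite Nat.add_0_r. auto.
  - change (run sg cs (S (S n)) i c) with (run sg cs (S n) (S i) (onestep sg cs i c)).
    rewrite IHn. replace (S i + n)%nat with (i + S n)%nat by lia. auto.
Qed.

Lemma exec_run (M : TASImpl) sg cs n : exec M sg cs n = run sg cs n 0 (init_cfg M).
Proof.
  induction n; auto. rewrite run_snoc, <- IHn. simpl. reflexivity.
Qed.

Definition sgf (f : nat -> bool) : Schedule := fun i => Some (f (Nat.div2 i)).

Lemma run_ps {M : TASImpl} f cs n : forall k (c : Cfg M),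
  run (sgf f) cs (2 * n) (2 * k) c = psrun cs (map f (seq k n)) c.
Proof.
  induction n; intros k c; [reflexivity|].
  replace (2 * S n)%nat with (S (S (2 * n))) by lia. cbn [run map seq].
  assert (E1 : onestep (sgf f) cs (2 * k) c = step (f k) (cs (f k) (ncoin c (f k))) c).
  { unfold onestep, sgf. rewrite Nat.div2_double. reflexivity. }
  assert (E2 : forall d, onestep (sgf f) cs (S (2 * k)) d = step (f k) (cs (f k) (ncoin d (f k))) d).
  { intros d. unfold onestep, sgf. rewrite Nat.div2_succ_double. reflexivity. }
  rewrite E1, E2.
  replace (S (S (2 * k))) with (2 * S k)%nat by lia.
  rewrite IHn. reflexivity.
Qed.

Lemma map_nth_seq_app {A : Type} (d : A) l : forall a,
  map (fun k => nth k (a ++ l) d) (seq (length a) (length l)) = l.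
Proof.
  induction l as [|x l IH]; intros a; simpl; auto.
  rewrite nth_middle. f_equal.
  specialize (IH (a ++ x :: nil)). rewrite <- app_assoc in IH. simpl in IH.
  rewrite length_app in IH. simpl in IH. rewrite Nat.add_1_r in IH. exact IH.
Qed.

Lemma lin_psrun (M : TASImpl) (HM : is_TAS M) : forall cs l, lin_ok (psrun cs l (init_cfg M)).
Proof.
  intros cs l. destruct HM as [_ HM].
  set (f := fun k => nth k l false).
  assert (E : map f (seq 0 (length l)) = l) by apply (map_nth_seq_app false l nil).
  rewrite <- E, <- (run_ps f cs (length l) 0), <- exec_run. apply HM.
Qed.

Fixpoint fsum (N : nat) (f : nat -> R) : R :=
  match N with O => 0 | S n => fsum n f + f n end.

Definition wt (M : TASImpl) (F : Omega M -> R) (n : nat) : R :=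
  match enumO M n with Some w => mu M w * F w | None => 0 end.

Definition aw (M : TASImpl) (n : nat) : R :=
  match enumO M n with Some w => mu M w | None => 0 end.

Definition setc {M : TASImpl} (cs : bool -> nat -> Omega M) p k w : bool -> nat -> Omega M :=
  fun q j => if Bool.eqb q p && Nat.eqb j k then w else cs q j.

Fixpoint EL {M : TASImpl} (N : nat) (base : bool -> nat -> Omega M) (L : list (bool * nat))
  (G : (bool -> nat -> Omega M) -> R) : R :=
  match L with
  | nil => G base
  | (p, k) :: L' => fsum N (wt M (fun w => EL N (setc base p k w) L' G))
  end.

Lemma fsum_ext N f g : (forall n, f n = g n) -> fsum N f = fsum N g.
Proof. intros H; induction N; simpl; auto. rewrite IHN, H; auto. Qed.

Lemma fsum_le N f g : (forall n, f n <= g n) -> fsum N f <= fsum N g.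
Proof. intros H; induction N; simpl; [lra|]. specialize (H N). lra. Qed.

Lemma fsum_plus N f g : fsum N (fun n => f n + g n) = fsum N f + fsum N g.
Proof. induction N; simpl; [lra|]. rewrite IHN; lra. Qed.

Lemma fsum_scal N c f : fsum N (fun n => c * f n) = c * fsum N f.
Proof. induction N; simpl; [lra|]. rewrite IHN; lra. Qed.

Lemma fsum_zero N : fsum N (fun _ => 0) = 0.
Proof. induction N; simpl; auto. rewrite IHN; lra. Qed.

Lemma fsum_swap N N' h :
  fsum N (fun i => fsum N' (fun j => h i j)) = fsum N' (fun j => fsum N (fun i => h i j)).
Proof.
  induction N; simpl.
  - rewrite fsum_zero; auto.
  - rewrite IHN. rewrite <- fsum_plus. auto.
Qed.

Lemma fsum_nonneg N f : (forall n, 0 <= f n) -> 0 <= fsum N f.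
Proof. intros H; induction N; simpl; [lra|]. specialize (H N); lra. Qed.

Lemma fsum_sum_f N f : fsum (S N) f = sum_f_R0 f N.
Proof. induction N as [|N IH]; [simpl; lra|]. change (fsum (S N) f + f (S N) = sum_f_R0 f (S N)). rewrite IH. reflexivity. Qed.

Lemma wt_le M (Hmu : forall w, 0 <= mu M w) F G n :
  (forall w, F w <= G w) -> wt M F n <= wt M G n.
Proof.
  intros H; unfold wt; destruct (enumO M n); [|lra].
  apply Rmult_le_compat_l; auto.
Qed.

Lemma wt_plus M F G n : wt M (fun w => F w + G w) n = wt M F n + wt M G n.
Proof. unfold wt; destruct (enumO M n); lra. Qed.

Lemma wt_const M c n : wt M (fun _ => c) n = aw M n * c.
Proof. unfold wt, aw; destruct (enumO M n); lra. Qed.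

Lemma double_wt M N (H : Omega M -> Omega M -> R) :
  fsum N (wt M (fun w => fsum N (wt M (fun w' => H w w')))) =
  fsum N (fun n => fsum N (fun m =>
    match enumO M n, enumO M m with
    | Some w, Some w' => mu M w * mu M w' * H w w'
    | _, _ => 0 end)).
Proof.
  apply fsum_ext; intros n. unfold wt. destruct (enumO M n) as [w|].
  - rewrite <- fsum_scal. apply fsum_ext; intros m. destruct (enumO M m); lra.
  - rewrite fsum_zero. auto.
Qed.

Lemma setc_comm {M : TASImpl} (b : bool -> nat -> Omega M) p k w q j w' :
  (p, k) <> (q, j) -> setc (setc b p k w) q j w' = setc (setc b q j w') p k w.
Proof.
  intros H. unfold setc. apply functional_extensionality; intros x.
  apply functional_extensionality; intros y.
  destruct (Bool.eqb x q && Nat.eqb y j) eqn:E1, (Bool.eqb x p && Nat.eqb y k) eqn:E2; auto.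
  apply andb_prop in E1, E2. destruct E1 as [E1 E1'], E2 as [E2 E2'].
  apply eqb_prop in E1, E2. apply Nat.eqb_eq in E1', E2'. subst. congruence.
Qed.

Lemma EL_swap {M : TASImpl} N base x y L G :
  x <> y -> @EL M N base (x :: y :: L) G = EL N base (y :: x :: L) G.
Proof.
  destruct x as [p k], y as [q j]. intros Hxy. simpl.
  rewrite (double_wt M N (fun w w' => EL N (setc (setc base p k w) q j w') L G)).
  rewrite (double_wt M N (fun w w' => EL N (setc (setc base q j w) p k w') L G)).
  rewrite fsum_swap. apply fsum_ext; intros n. apply fsum_ext; intros m.
  destruct (enumO M n), (enumO M m); try lra.
  rewrite setc_comm; auto. lra.
Qed.

Lemma EL_front {M : TASImpl} N x B G : forall A base, ~ In x A ->
  @EL M N base (A ++ x :: B) G = EL N base (x :: A ++ B) G.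
Proof.
  induction A as [|y A IH]; intros base H; simpl; auto.
  destruct y as [q j].
  transitivity (EL N base ((q, j) :: x :: A ++ B) G).
  - simpl. apply fsum_ext; intros n. unfold wt. destruct (enumO M n); auto.
    rewrite IH; auto. intros Hin; apply H; right; auto.
  - rewrite EL_swap; auto. intros E; apply H; left; auto.
Qed.

Lemma EL_ext {M : TASImpl} N L : forall base G H,
  (forall cs, (forall q j, ~ In (q, j) L -> cs q j = base q j) -> G cs = H cs) ->
  @EL M N base L G = EL N base L H.
Proof.
  induction L as [|[p k] L IH]; intros base G H Hyp; simpl.
  - apply Hyp; auto.
  - apply fsum_ext; intros n. unfold wt. destruct (enumO M n) as [w|]; auto.
    f_equal. apply IH. intros cs Hcs. apply Hyp. intros q j Hn.
    rewrite Hcs. unfold setc.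
    destruct (Bool.eqb q p && Nat.eqb j k) eqn:E; auto.
    apply andb_prop in E. destruct E as [E1 E2]. apply eqb_prop in E1. apply Nat.eqb_eq in E2.
    subst. exfalso; apply Hn; left; auto.
    intros Hin; apply Hn; right; auto.
Qed.

Lemma EL_mono {M : TASImpl} (Hmu : forall w, 0 <= mu M w) N L : forall base G H,
  (forall cs, G cs <= H cs) -> @EL M N base L G <= EL N base L H.
Proof.
  induction L as [|[p k] L IH]; intros base G H Hyp; simpl; auto.
  apply fsum_le; intros n. apply wt_le; auto.
Qed.

Lemma EL_plus {M : TASImpl} N L : forall base G H,
  @EL M N base L (fun cs => G cs + H cs) = EL N base L G + EL N base L H.
Proof.
  induction L as [|[p k] L IH]; intros base G H; simpl; auto.
  rewrite <- fsum_plus. apply fsum_ext; intros n. rewrite <- wt_plus.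
  unfold wt; destruct (enumO M n); auto. rewrite IH; auto.
Qed.

Lemma EL_const {M : TASImpl} N L : forall base c,
  @EL M N base L (fun _ => c) = c * fsum N (aw M) ^ length L.
Proof.
  induction L as [|[p k] L IH]; intros base c; simpl; [lra|].
  transitivity (fsum N (fun n => (c * fsum N (aw M) ^ length L) * aw M n)).
  - apply fsum_ext; intros n. unfold wt.
    change (aw M n) with (match enumO M n with Some w => mu M w | None => 0 end).
    destruct (enumO M n); [|lra].
    rewrite IH. ring.
  - rewrite fsum_scal. ring.
Qed.

Lemma aw_nonneg M (Hmu : forall w, 0 <= mu M w) n : 0 <= aw M n.
Proof. unfold aw; destruct (enumO M n); auto; lra. Qed.

Lemma partial_le_lim (u : nat -> R) l :
  (forall n, 0 <= u n) -> infinite_sum u l -> forall n, sum_f_R0 u n <= l.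
Proof.
  intros H Hl n. apply growing_ineq; auto.
  intros m. simpl. specialize (H (S m)). lra.
Qed.

Lemma SN_le1 M (Hv : valid_coins M) N : fsum N (aw M) <= 1.
Proof.
  destruct Hv as (Hmu & _ & _ & Hs).
  destruct N; [simpl; lra|].
  rewrite fsum_sum_f. apply partial_le_lim; auto. intros; apply aw_nonneg; auto.
Qed.

Lemma SN_nonneg M (Hv : valid_coins M) N : 0 <= fsum N (aw M).
Proof. destruct Hv as (Hmu & _). apply fsum_nonneg; intros; apply aw_nonneg; auto. Qed.

Lemma SN_cv M (Hv : valid_coins M) eps : eps > 0 ->
  exists N0, forall N, (N >= N0)%nat -> 1 - fsum N (aw M) < eps.
Proof.
  intros He. destruct Hv as (Hmu & _ & _ & Hs).
  destruct (Hs eps He) as [N0 HN]. exists (S N0). intros N HN0.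
  destruct N as [|N]; [lia|]. rewrite fsum_sum_f.
  specialize (HN N ltac:(lia)). unfold Rdist in HN.
  apply Rabs_def2 in HN. destruct HN. change (fun n : nat => match enumO M n with Some w => mu M w | None => 0 end) with (aw M) in *. lra.
Qed.

Lemma Ecoin_spec M (Hv : valid_coins M) f : (forall w, 0 <= f w <= 1) ->
  0 <= Ecoin M f <= 1 /\ forall N, fsum N (wt M f) <= Ecoin M f.
Proof.
  intros Hf. destruct Hv as (Hmu & Hv2 & Hv3 & Hs).
  assert (Hv : valid_coins M) by (repeat split; auto).
  assert (Hb : forall n, 0 <= wt M f n <= aw M n).
  { intros n; unfold wt, aw; destruct (enumO M n); [|lra]. specialize (Hf o); specialize (Hmu o).
    split; [apply Rmult_le_pos; lra|]. rewrite <- (Rmult_1_r (mu M o)) at 2.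
    apply Rmult_le_compat_l; lra. }
  assert (Hpart : forall n, sum_f_R0 (wt M f) n <= 1).
  { intros n. rewrite <- fsum_sum_f. eapply Rle_trans; [|apply (SN_le1 M Hv (S n))].
    apply fsum_le; intros; apply Hb. }
  assert (Hgr : Un_growing (sum_f_R0 (wt M f))).
  { intros m. simpl. specialize (Hb (S m)). lra. }
  destruct (growing_cv _ Hgr) as [l Hl].
  { exists 1. intros x [n ->]. apply Hpart. }
  assert (Hps : infinite_sum (wt M f) (Ecoin M f)).
  { unfold Ecoin, psum. apply epsilon_spec. exists l. exact Hl. }
  assert (Hle : forall n, sum_f_R0 (wt M f) n <= Ecoin M f) by (apply growing_ineq; auto).
  split; [split|].
  - eapply Rle_trans; [|apply (Hle 0%nat)]. simpl. apply Hb.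
  - destruct (Rle_dec (Ecoin M f) 1) as [E|E]; auto. exfalso.
    destruct (Hps (Ecoin M f - 1) ltac:(lra)) as [N0 HN].
    specialize (HN N0 (le_n _)). unfold Rdist in HN. apply Rabs_def2 in HN. destruct HN.
    specialize (Hpart N0). lra.
  - intros N. destruct N; simpl.
    + eapply Rle_trans; [|apply (Hle 0%nat)]. simpl. apply Hb.
    + change (fsum N (wt M f) + wt M f N) with (fsum (S N) (wt M f)). rewrite fsum_sum_f. auto.
Qed.

Definition ind {M : TASImpl} (t : nat) (c : Cfg M) : R :=
  if (t <=? nmem c false)%nat || (t <=? nmem c true)%nat then 1 else 0.

Lemma pv_bounds M (Hv : valid_coins M) sg t n : forall i c, 0 <= pv M sg t n i c <= 1.
Proof.
  induction n; intros i c; simpl.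
  - destruct (_ || _); lra.
  - destruct (sg i) as [p|]; auto. destruct (ph c p); auto.
    apply Ecoin_spec; auto.
Qed.

Definition pos {M : TASImpl} (K : nat) (c : Cfg M) : list (bool * nat) :=
  map (pair false) (seq (ncoin c false) (K - ncoin c false)) ++
  map (pair true) (seq (ncoin c true) (K - ncoin c true)).

Lemma mem_step_ncoin {M : TASImpl} p (c : Cfg M) : ncoin (mem_step p c) = ncoin c.
Proof.
  destruct c as [l1 ph1 m1 n1 k1 s1]; unfold mem_step; simpl.
  destruct (ph1 p) as [ | o | b x]; simpl; try destruct o; simpl; auto.
Qed.

Lemma coin_step_ncoin {M : TASImpl} p w (c : Cfg M) :
  ncoin (coin_step p w c) = upd (ncoin c) p (S (ncoin c p)).
Proof. reflexivity. Qed.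

Lemma pos_split {M : TASImpl} K p (c : Cfg M) :
  (ncoin c p < K)%nat ->
  exists A B, pos K c = A ++ (p, ncoin c p) :: B /\
    (forall w, pos K (coin_step p w c) = A ++ B) /\
    ~ In (p, ncoin c p) A /\ ~ In (p, ncoin c p) (A ++ B).
Proof.
  intros H. unfold pos.
  assert (E : forall k, (k < K)%nat -> seq k (K - k) = k :: seq (S k) (K - S k)).
  { intros k Hk. replace (K - k)%nat with (S (K - S k)) by lia. reflexivity. }
  destruct p; unfold upd; simpl.
  - exists (map (pair false) (seq (ncoin c false) (K - ncoin c false))),
      (map (pair true) (seq (S (ncoin c true)) (K - S (ncoin c true)))).
    rewrite (E _ H). simpl. repeat split; try solve [intros w; reflexivity]; intros Hin;
    try contradiction; repeat (apply in_app_or in Hin; destruct Hin as [Hin|Hin]);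
    apply in_map_iff in Hin; destruct Hin as (x & Hx & Hx2); try discriminate;
    injection Hx; intros; subst; apply in_seq in Hx2; lia.
  - exists nil, (map (pair false) (seq (S (ncoin c false)) (K - S (ncoin c false))) ++
      map (pair true) (seq (ncoin c true) (K - ncoin c true))).
    rewrite (E _ H). simpl. repeat split; try solve [intros w; reflexivity]; intros Hin;
    try contradiction; repeat (apply in_app_or in Hin; destruct Hin as [Hin|Hin]);
    apply in_map_iff in Hin; destruct Hin as (x & Hx & Hx2); try discriminate;
    injection Hx; intros; subst; apply in_seq in Hx2; lia.
Qed.

Lemma pow_le1 x n : 0 <= x <= 1 -> 0 <= x ^ n <= 1.
Proof.
  intros H; induction n; simpl; [lra|]. split; [apply Rmult_le_pos; lra|].
  rewrite <- (Rmult_1_r 1). apply Rmult_le_compat; lra.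
Qed.

Lemma pv_ge M (Hv : valid_coins M) sg t K N n : forall i (c : Cfg M) base,
  (forall p, (ncoin c p + n <= K)%nat) ->
  EL N base (pos K c) (fun cs => ind t (run sg cs n i c)) <= pv M sg t n i c.
Proof.
  assert (Hmu : forall w, 0 <= mu M w) by apply Hv.
  induction n; intros i c base Hk.
  - simpl. rewrite EL_const. fold (ind t c).
    assert (A := pow_le1 (fsum N (aw M)) (length (pos K c)) (conj (SN_nonneg M Hv N) (SN_le1 M Hv N))).
    unfold ind; destruct (_ || _); nra.
  - cbn [run pv]. unfold onestep. destruct (sg i) as [p|] eqn:Hs.
    2:{ apply IHn. intros p; specialize (Hk p); lia. }
    unfold step. destruct (ph c p) eqn:Hp.
    2,3: unfold pos; rewrite <- (mem_step_ncoin p c); fold (pos K (mem_step p c)); apply IHn; intros q; rewrite mem_step_ncoin;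
         specialize (Hk q); lia.
    assert (Hk0 : (ncoin c p < K)%nat) by (specialize (Hk p); lia).
    destruct (pos_split K p c Hk0) as (A & B & HA & HB & HnA & HnAB).
    rewrite HA, EL_front; auto. simpl.
    destruct (Ecoin_spec M Hv (fun w => pv M sg t n (S i) (coin_step p w c))) as [_ HE].
    { intros w; apply pv_bounds; auto. }
    eapply Rle_trans; [|apply (HE N)].
    apply fsum_le; intros m. apply wt_le; auto. intros w.
    rewrite (EL_ext N (A ++ B) (setc base p (ncoin c p) w) _
      (fun cs => ind t (run sg cs n (S i) (coin_step p w c)))).
    + rewrite <- (HB w). apply IHn. intros q.
      rewrite coin_step_ncoin. unfold upd. specialize (Hk q).
      destruct (Bool.eqb q p) eqn:E; [apply eqb_prop in E; subst|]; lia.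
    + intros cs Hcs. rewrite (Hcs p (ncoin c p) HnAB). unfold setc.
      rewrite eqb_reflx, Nat.eqb_refl. reflexivity.
Qed.

Fixpoint allbl (m : nat) : list (list bool) :=
  match m with
  | O => nil :: nil
  | S m => map (cons false) (allbl m) ++ map (cons true) (allbl m)
  end.

Lemma allbl_in l : In l (allbl (length l)).
Proof.
  induction l as [|x l IH]; simpl; auto.
  apply in_or_app. destruct x; [right|left]; apply in_map; auto.
Qed.

Lemma allbl_len m : length (allbl m) = (2 ^ m)%nat.
Proof. induction m; simpl; auto. rewrite length_app, !length_map, IHm. lia. Qed.

Definition sumL (F : list (list bool)) (g : list bool -> R) : R :=
  fold_right (fun l acc => g l + acc) 0 F.

Lemma sumL_ge F g l : (forall l, 0 <= g l) -> In l F -> g l <= sumL F g.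
Proof.
  intros H; induction F as [|x F IH]; simpl; [tauto|].
  assert (0 <= sumL F g) by (clear IH; induction F; simpl; [lra|]; specialize (H a); lra).
  intros [E|E]; [subst; lra|]. specialize (IH E). specialize (H x). lra.
Qed.

Lemma sumL_lt F g c : F <> nil -> (forall l, In l F -> g l < c) -> sumL F g < INR (length F) * c.
Proof.
  induction F as [|x F IH]; intros Hne H; [congruence|].
  destruct F as [|y F].
  - simpl. specialize (H x (or_introl eq_refl)). lra.
  - assert (A := IH ltac:(congruence) (fun l Hl => H l (or_intror Hl))).
    specialize (H x (or_introl eq_refl)).
    replace (INR (length (x :: y :: F))) with (INR (length (y :: F)) + 1)
      by (rewrite <- S_INR; reflexivity).
    change (sumL (x :: y :: F) g) with (g x + sumL (y :: F) g). lra.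
Qed.

Lemma EL_sumL {M : TASImpl} N L base F (G : list bool -> (bool -> nat -> Omega M) -> R) :
  EL N base L (fun cs => sumL F (fun l => G l cs)) = sumL F (fun l => EL N base L (G l)).
Proof.
  induction F as [|x F IH]; simpl.
  - rewrite EL_const. ring.
  - rewrite EL_plus, IH. auto.
Qed.

Lemma sumL_le F g h : (forall l, In l F -> g l <= h l) -> sumL F g <= sumL F h.
Proof.
  induction F as [|x F IH]; intros H; simpl; [lra|].
  assert (A := IH (fun l Hl => H l (or_intror Hl))). specialize (H x (or_introl eq_refl)). lra.
Qed.

Lemma bernoulli x k : 0 <= x <= 1 -> 1 - INR k * (1 - x) <= x ^ k.
Proof.
  intros H; induction k; [simpl; lra|].
  rewrite S_INR. change (x ^ S k) with (x * x ^ k). assert (0 <= INR k) by apply pos_INR.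
  assert (x * (1 - INR k * (1 - x)) <= x * x ^ k) by (apply Rmult_le_compat_l; lra).
  assert (0 <= INR k * ((1 - x) * (1 - x))) by (apply Rmult_le_pos; [lra|nra]).
  nra.
Qed.

Theorem theorem14 (M : TASImpl) (HM : is_TAS M) (t : nat) :
  exists sg : Schedule, exists l : R,
    is_lub (fun x => exists n : nat, x = prob_by M sg t n) l /\
    / 4 ^ t <= l.
Proof.
  assert (Hv : valid_coins M) by apply HM.
  assert (HL := lin_psrun M HM).
  assert (Hmu : forall w, 0 <= mu M w) by apply Hv.
  assert (Hw : exists w0 : Omega M, True).
  { destruct Hv as (_ & _ & _ & Hs). apply NNPP; intro Hn.
    assert (Z : forall n, aw M n = 0).
    { intros n; unfold aw; destruct (enumO M n) eqn:E; auto. exfalso; apply Hn; eauto. }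
    destruct (Hs (/2) ltac:(lra)) as [N0 HN]. specialize (HN N0 (le_n _)).
    change (fun n : nat => match enumO M n with Some w => mu M w | None => 0 end) with (aw M) in HN.
    rewrite <- fsum_sum_f, (fsum_ext _ _ (fun _ => 0) Z), fsum_zero in HN.
    unfold Rdist in HN. rewrite Rabs_left in HN; lra. }
  destruct Hw as [w0 _].
  set (base := fun (_ : bool) (_ : nat) => w0).
  set (m := (2 * t)%nat). set (F := allbl m). set (n := (2 * m)%nat).
  set (sgl := fun l : list bool => sgf (fun k => nth k l false)).
  set (Lk := length (pos n (init_cfg M))).
  set (S := sumL F (fun l => pv M (sgl l) t n 0 (init_cfg M))).
  assert (Key : forall N, fsum N (aw M) ^ Lk <= S).
  { intros N. unfold S.
    eapply Rle_trans; [|apply sumL_le with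
      (g := fun l => EL N base (pos n (init_cfg M)) (fun cs => ind t (run (sgl l) cs n 0 (init_cfg M))));
      intros l _; apply pv_ge; auto; intros p; simpl; lia].
    rewrite <- EL_sumL. rewrite <- (Rmult_1_l (_ ^ _)). unfold Lk. rewrite <- (EL_const N (pos n (init_cfg M)) base 1).
    apply EL_mono; auto. intros cs.
    destruct (det M HL cs t) as (l0 & Hl0 & Hg).
    set (l1 := l0 ++ repeat false (m - length l0)).
    assert (Hl1 : length l1 = m) by (unfold l1; rewrite length_app, repeat_length; unfold m; lia).
    assert (Hin : In l1 F) by (unfold F; rewrite <- Hl1; apply allbl_in).
    assert (Hrun : run (sgl l1) cs n 0 (init_cfg M) = psrun cs l1 (init_cfg M)).
    { change (run (sgf (fun k => nth k l1 false)) cs (2 * m) (2 * 0) (init_cfg M) = psrun cs l1 (init_cfg M)). rewrite run_ps.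
      rewrite <- Hl1. f_equal. exact (map_nth_seq_app false l1 nil). }
    eapply Rle_trans; [|apply (sumL_ge F _ l1)]; auto.
    - simpl. rewrite Hrun. unfold ind. unfold l1. rewrite psrun_app.
      unfold good in Hg.
      assert (A0 := psrun_nmem cs (repeat false (m - length l0)) (psrun cs l0 (init_cfg M)) false).
      assert (A1 := psrun_nmem cs (repeat false (m - length l0)) (psrun cs l0 (init_cfg M)) true).
      destruct Hg as [Hg|Hg].
      + assert (E : (t <=? nmem (psrun cs (repeat false (m - length l0)) (psrun cs l0 (init_cfg M))) false)%nat = true)
          by (apply Nat.leb_le; lia). rewrite E. simpl. lra.
      + assert (E : (t <=? nmem (psrun cs (repeat false (m - length l0)) (psrun cs l0 (init_cfg M))) true)%nat = true)
          by (apply Nat.leb_le; lia). rewrite E, orb_true_r. lra.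
    - intros l. unfold ind. destruct (_ || _); lra. }
  assert (S1 : 1 <= S).
  { destruct (Rle_dec 1 S) as [E|E]; auto. exfalso.
    assert (HLk : 0 <= INR Lk) by apply pos_INR.
    set (eps := (1 - S) / (INR Lk + 1)).
    assert (He : eps > 0) by (unfold eps; apply Rdiv_lt_0_compat; lra).
    assert (He2 : eps * (INR Lk + 1) = 1 - S) by (unfold eps; field; lra).
    destruct (SN_cv M Hv eps He) as [N0 HN]. specialize (HN N0 (le_n _)).
    set (x := fsum N0 (aw M)) in *.
    assert (Hx : 0 <= x <= 1) by (split; [apply SN_nonneg | apply SN_le1]; auto).
    assert (B := bernoulli x Lk Hx). specialize (Key N0). fold x in Key.
    assert (INR Lk * (1 - x) <= INR Lk * eps) by (apply Rmult_le_compat_l; lra).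
    nra. }
  assert (Hex : exists l, In l F /\ / 4 ^ t <= pv M (sgl l) t n 0 (init_cfg M)).
  { apply NNPP; intros Hn.
    assert (Hlt : forall l, In l F -> pv M (sgl l) t n 0 (init_cfg M) < / 4 ^ t).
    { intros l Hl. apply Rnot_le_lt. intros Hle. apply Hn. eauto. }
    assert (Hne : F <> nil).
    { intros E. assert (A := allbl_in (repeat false m)). rewrite repeat_length in A.
      fold F in A. rewrite E in A. destruct A. }
    assert (A := sumL_lt F _ _ Hne Hlt). fold S in A.
    unfold F in A. rewrite allbl_len, pow_INR in A.
    replace (INR 2) with 2 in A by (simpl; lra).
    unfold m in A. rewrite pow_mult in A. replace (2 ^ 2) with 4 in A by ring.
    rewrite Rinv_r in A; [lra|]. apply pow_nonzero; lra. }
  destruct Hex as (l & _ & Hl).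
  exists (sgl l).
  destruct (completeness (fun x => exists n0 : nat, x = prob_by M (sgl l) t n0)) as [ub Hub].
  - exists 1. intros x [n0 ->]. unfold prob_by. apply pv_bounds; auto.
  - exists (prob_by M (sgl l) t 0). eauto.
  - exists ub. split; auto. eapply Rle_trans; [apply Hl|]. apply Hub. exists n. reflexivity.
Qed.
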